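(* Let $\mathcal{G}=(G;T_1,T_2;\theta)\in\mathcal{G}_2^{sym}$ with $\mathcal{G}\neq\mathcal{K}_1$. Then $s_\theta$ fixes exactly one vertex of $G$, and this vertex has even degree at least $4$.
   Context: A multi-graph is finite and loop-free, possibly with parallel edges. A $2$-tree decomposition is $(G;T_1,T_2)$ with $G$ a multi-graph and $T_1,T_2$ spanning trees of $G$ whose edge sets partition $E(G)$. Let $\mathbb{Z}_2=\langle s\rangle$. A $\mathbb{Z}_2$-symmetric multi-graph is a pair $(G,\theta)$ with $\theta:\mathbb{Z}_2\to\mathrm{Aut}(G)$ a non-trivial homomorphism; write $s_\theta=\theta(s)$ and for an edge $e=v_1v_2$, $s_\theta(e)=s_\theta(v_1)s_\theta(v_2)$. A vertex $v$ (edge $e$) is fixed if $s_\theta(v)=v$ ($s_\theta(e)=e$). A symmetric $2$-tree decomposition is $(G;T_1,T_2;\theta)$ where $(G;T_1,T_2)$ is a $2$-tree decomposition, $(G,\theta)$ is $\mathbb{Z}_2$-symmetric and $s_\theta(T_i)=T_i$ for $i=1,2$. $\mathcal{G}_2^{sym}$ denotes the set of symmetric $2$-tree decompositions with no fixed edges, together with $\mathcal{K}_1=(K_1;T_1,T_2;\theta)$ where $K_1$ is a single vertex, the $T_i$ are edgeless and $\theta$ is trivial. *)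

(* Defs.v *)
(* A finite loop-free multigraph is given by finite types
   V (vertices) and E (edges) with endpoint maps src, tgt : E -> V
   (src e != tgt e); parallel edges are allowed. *)
From mathcomp Require Import all_boot.
Set Implicit Arguments. Unset Strict Implicit. Unset Printing Implicit Defensive.

Section Multigraph.
Variables (V E : finType) (src tgt : E -> V).

Definition joins (e : E) (x y : V) : bool :=
  ((src e == x) && (tgt e == y)) || ((src e == y) && (tgt e == x)).

Definition adjF (F : {set E}) : rel V := fun x y => [exists e in F, joins e x y].

Definition connectedF (F : {set E}) : Prop := forall x y : V, connect (adjF F) x y.

(* es, vs describe a cycle in F: k >= 2 distinct edges, k distinct vertices,
   edge i joins vertex i and vertex i+1 (mod k). *)
Definition is_cycle (F : {set E}) (es : seq E) (vs : seq V) : bool :=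
  [&& 2 <= size es, size vs == size es, uniq es, uniq vs,
      all (fun e => e \in F) es
    & all2 (fun e p => joins e p.1 p.2) es (zip vs (rot 1 vs))].

Definition acyclicF (F : {set E}) : Prop := forall es vs, ~~ is_cycle F es vs.

Definition spanning_tree (F : {set E}) : Prop := connectedF F /\ acyclicF F.

Definition two_tree_decomposition (T1 T2 : {set E}) : Prop :=
  [/\ spanning_tree T1, spanning_tree T2, T1 :&: T2 = set0 & T1 :|: T2 = setT].

Definition automorphism (sv : V -> V) (se : E -> E) : Prop :=
  [/\ bijective sv, bijective se & forall e, joins (se e) (sv (src e)) (sv (tgt e))].

(* a non-trivial homomorphism Z2 -> Aut(G), given by the image s_theta = (sv, se)
   of the generator: an automorphism that is an involution and not the identity *)
Definition Z2_symmetry (sv : V -> V) (se : E -> E) : Prop :=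
  [/\ automorphism sv se, (forall v, sv (sv v) = v), (forall e, se (se e) = e)
    & ~ ((forall v, sv v = v) /\ (forall e, se e = e))].

Definition symmetric_two_tree_decomposition (T1 T2 : {set E}) sv se : Prop :=
  [/\ two_tree_decomposition T1 T2, Z2_symmetry sv se,
      se @: T1 = T1 & se @: T2 = T2].

Definition no_fixed_edges (se : E -> E) : Prop := forall e, se e != e.

(* degree (loop-free, so each incident edge counts once) *)
Definition degree (v : V) : nat := #|[set e | (src e == v) || (tgt e == v)]|.

End Multigraph.

(* Main.v *)
Require Import Defs.
From mathcomp Require Import all_boot.
Set Implicit Arguments. Unset Strict Implicit. Unset Printing Implicit Defensive.

Lemma joinsC (V E : finType) (src tgt : E -> V) e x y :
  joins src tgt e x y = joins src tgt e y x.
Proof. by rewrite /joins orbC. Qed.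

Lemma adjF_sym (V E : finType) (src tgt : E -> V) F : symmetric (adjF src tgt F).
Proof.
move=> x y; apply/existsP/existsP => -[e /andP[eF j]]; exists e;
  by rewrite eF joinsC.
Qed.

Lemma joins_inc (V E : finType) (src tgt : E -> V) e x y :
  joins src tgt e x y -> ((src e == x) || (tgt e == x)) && ((src e == y) || (tgt e == y)).
Proof. by case/orP=> /andP[/eqP-> /eqP->]; rewrite !eqxx ?orbT. Qed.

Lemma avoid_path (V E : finType) (src tgt : E -> V) F e0 z x p :
  (src e0 == z) || (tgt e0 == z) -> z \notin x :: p ->
  path (adjF src tgt F) x p -> path (adjF src tgt (F :\ e0)) x p.
Proof.
move=> hz; elim: p x => [//|y p IH] x /=.
rewrite !inE negb_or => /andP[zx]; rewrite negb_or => /andP[zy zp].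
case/andP=> /existsP[e /andP[eF j]] pp; rewrite IH ?inE ?negb_or ?zy //= andbT.
apply/existsP; exists e; rewrite !inE eF andbT j andbT.
apply/eqP=> ee; move: j; rewrite ee.
by case/orP=> /andP[/eqP h1 /eqP h2]; case/orP: hz => /eqP hz;
  move: zx zy; rewrite -hz ?h1 ?h2 eqxx ?andbF.
Qed.

Lemma joins_map (V E : finType) (src tgt : E -> V) sv se e x y :
  (forall e, joins src tgt (se e) (sv (src e)) (sv (tgt e))) ->
  joins src tgt e x y -> joins src tgt (se e) (sv x) (sv y).
Proof.
move=> h; case/orP=> /andP[/eqP<- /eqP<-] //; by rewrite joinsC.
Qed.

Lemma map_path_adj (V E : finType) (src tgt : E -> V) sv se (F F' : {set E}) x p :
  (forall e, joins src tgt (se e) (sv (src e)) (sv (tgt e))) ->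
  (forall e, e \in F -> se e \in F') ->
  path (adjF src tgt F) x p -> path (adjF src tgt F') (sv x) (map sv p).
Proof.
move=> hj hF; elim: p x => [//|y p IH] x /= /andP[/existsP[e /andP[eF j]] pp].
rewrite IH // andbT; apply/existsP; exists (se e); rewrite hF //=.
exact: joins_map.
Qed.

Lemma path_edges (V E : finType) (src tgt : E -> V) (F : {set E}) x p :
  uniq (x :: p) -> path (adjF src tgt F) x p ->
  exists es : seq E, [/\ size es = size p, uniq es, {subset es <= F},
    all2 (fun e pr => joins src tgt e pr.1 pr.2) es (zip (x :: p) p)
    & forall e, e \in es -> (src e \in x :: p) && (tgt e \in x :: p)].
Proof.
elim: p x => [|y p IH] x.
  by move=> _ _; exists [::]; split.
move=> /= /andP[xn u] /andP[/existsP[f /andP[fF j]] pp].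
have [es [s1 u1 s2 a1 a2]] := IH y u pp.
exists (f :: es); split => //=.
- by rewrite s1.
- rewrite u1 andbT; apply/negP => /a2 /andP[h1 h2].
  case/orP: j => /andP[/eqP e1 /eqP e2]; move: xn.
    by rewrite -e1 h1.
  by rewrite -e2 h2.
- by move=> e; rewrite inE => /orP[/eqP->|/s2].
- by rewrite j a1.
- move=> e; rewrite inE => /orP[/eqP->|/a2/andP[h1 h2]].
    by case/orP: j => /andP[/eqP-> /eqP->]; rewrite !inE !eqxx ?orbT.
  by rewrite inE h1 orbT inE h2 orbT.
Qed.

Lemma zip_rcons_last (T : Type) (x z : T) p :
  zip (x :: p) (rcons p z) = rcons (zip (x :: p) p) (last x p, z).
Proof. by elim: p x => [|y p IH] x //=; rewrite IH. Qed.

Lemma all2_rcons (S T : Type) (r : S -> T -> bool) s t a b :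
  size s = size t -> all2 r (rcons s a) (rcons t b) = all2 r s t && r a b.
Proof.
elim: s t => [|x s IH] [|y t] //= h.
  by rewrite andbT.
by rewrite IH ?andbA //; case: h.
Qed.

Lemma cut_lemma (V E : finType) (src tgt : E -> V) (F : {set E}) e0 :
  (forall e, src e != tgt e) -> acyclicF src tgt F -> e0 \in F ->
  ~ connect (adjF src tgt (F :\ e0)) (src e0) (tgt e0).
Proof.
move=> lf ac e0F /connectP[p0 pp0 hl].
case: (shortenP pp0) hl => p pp up _ hl.
have [es [s1 u1 s2 a1 a2]] := path_edges up pp.
apply: (negP (ac (rcons es e0) (src e0 :: p))).
have pn : p != [::] by case: p {pp up s1 a1 a2} hl => //= h; move: (lf e0); rewrite h eqxx.
have up' := up; rewrite /= in up'.
rewrite /is_cycle size_rcons s1 /= eqxx up' /=.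
rewrite rcons_uniq u1 andbT.
apply/and4P; split.
- by case: p pn {pp up up' s1 a1 a2 hl}.
- by apply/negP => /s2; rewrite !inE eqxx.
- rewrite all_rcons e0F /=; apply/allP => e /s2; rewrite !inE => /andP[]//.
- rewrite rot1_cons zip_rcons_last all2_rcons ?a1 /=.
    by rewrite -hl /joins !eqxx orbT.
  by rewrite size_zip /= s1; apply/esym/minn_idPr; apply: leqnSn.
Qed.

Lemma size_shorten (T : eqType) (x : T) p : size (shorten x p) <= size p.
Proof.
elim: p x => //= y p IH x; case: ifP => _ /=.
  exact: leq_trans (IH x) (leqnSn _).
by rewrite ltnS IH.
Qed.

Lemma even_invol (T : finType) (f : T -> T) (D : {set T}) :
  (forall x, x \in D -> f x \in D) -> (forall x, f (f x) = x) ->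
  (forall x, x \in D -> f x != x) -> ~~ odd #|D|.
Proof.
move=> hD fK hnf; have [n] := ubnP #|D|; elim: n D hD hnf => // n IH D hD hnf hn.
case: (set_0Vmem D) => [->|[x xD]]; first by rewrite cards0.
have fxD : f x \in D :\ x by rewrite !inE hD // hnf.
have e1 := cardsD1 x D; have e2 := cardsD1 (f x) (D :\ x).
rewrite xD fxD in e1 e2.
have h' : ~~ odd #|D :\ x :\ f x|.
  apply: IH.
  - move=> y; rewrite !inE => /and3P[yfx yx yD]; rewrite hD // andbT.
    apply/andP; split; apply/eqP => h.
      by move: yx; rewrite -[y]fK h fK eqxx.
    by move: yfx; rewrite -[y]fK h eqxx.
  - by move=> y; rewrite !inE => /and3P[_ _ /hnf].
  - by rewrite e1 e2 !add1n ltnS in hn; exact: ltnW hn.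
by rewrite e1 e2 /= negbK.
Qed.

Lemma joins_two (V E : finType) (src tgt : E -> V) e a b c :
  joins src tgt e a c -> joins src tgt e c b -> a != c -> a = b.
Proof.
case/orP=> /andP[/eqP h1 /eqP h2]; case/orP=> /andP[/eqP h3 /eqP h4] ac.
- by move: ac; rewrite -h1 -h3 eqxx.
- by rewrite -h1 -h3.
- by rewrite -h2 -h4.
- by move: ac; rewrite -h2 -h4 eqxx.
Qed.

Lemma cut_lemma' (V E : finType) (src tgt : E -> V) (F : {set E}) e0 x y :
  (forall e, src e != tgt e) -> acyclicF src tgt F -> e0 \in F ->
  joins src tgt e0 x y -> ~ connect (adjF src tgt (F :\ e0)) x y.
Proof.
move=> lf ac e0F; case/orP=> /andP[/eqP <- /eqP <-]; first exact: cut_lemma.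
rewrite (sym_connect_sym (adjF_sym _ _ _)); exact: cut_lemma.
Qed.

Unset Implicit Arguments.
Theorem lemma5p2 (V E : finType) (src tgt : E -> V)
  (loopfree : forall e, src e != tgt e)
  (T1 T2 : {set E}) (sv : V -> V) (se : E -> E)
  (Hsym : symmetric_two_tree_decomposition src tgt T1 T2 sv se)
  (Hnofix : no_fixed_edges se) :
  exists v : V,
    [/\ sv v = v, (forall w, sv w = w -> w = v),
        ~~ odd (degree src tgt v) & 4 <= degree src tgt v].
Proof.
case: Hsym => [[[c1 a1] [c2 a2] T12 T12U] [[_ _ hj] svK seK ntriv] iT1 iT2].
have svI : injective sv := can_inj svK.
have seI : injective se := can_inj seK.
have mT1 e : e \in T1 -> se e \in T1 by move=> h; rewrite -iT1; apply/imsetP; exists e.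
have mT2 e : e \in T2 -> se e \in T2 by move=> h; rewrite -iT2; apply/imsetP; exists e.
have mTD (T : {set E}) e0 : (forall e, e \in T -> se e \in T) ->
    forall e, e \in T :\ e0 -> se e \in T :\ se e0.
  move=> hT e; rewrite !inE => /andP[ne eT]; rewrite hT // andbT.
  by apply: contra ne => /eqP/seI ->.
have two : exists v w : V, v != w.
  case: (boolP [exists v : V, exists w : V, v != w]).
    by case/existsP=> v /existsP[w h]; exists v, w.
  rewrite negb_exists => /forallP hall; exfalso; apply: ntriv.
  have eqall (v w : V) : v = w.
    by move: (hall v); rewrite negb_exists => /forallP/(_ w); rewrite negbK => /eqP.
  split=> [v|e]; first exact: eqall.
  by move: (loopfree e); rewrite (eqall (src e) (tgt e)) eqxx.
have [u fu] : exists u, sv u = u.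
  case: (boolP [exists u : V, sv u == u]); first by case/existsP=> u /eqP; exists u.
  rewrite negb_exists => /forallP hnf; exfalso.
  have [v0 [w0 _]] := two.
  have main n : forall v p, size p <= n -> path (adjF src tgt T1) v p ->
      last v p = sv v -> False.
  { elim: n => [|n IH] v p0 hs pp0 hl0.
    all: have hsz := size_shorten v p0.
    all: case: (shortenP pp0) hl0 hsz => p pp up sub hl hsz.
    all: case: p pp up sub hl hsz => [|x1 q] pp up sub hl hsz.
    1,3: by move: (hnf v); rewrite -hl /= eqxx.
    1: by move: hs hsz; rewrite leqn0 => /eqP ->.
    have pq : path (adjF src tgt T1) x1 q by case/andP: pp.
    case/andP: (pp) => /existsP[e1 /andP[e1T j1]] _.
    have se1 : se e1 \in T1 := mT1 _ e1T.
    have jse1 := joins_map hj j1.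
    have ne1 : se e1 != e1 := Hnofix e1.
    case/lastP: q pp pq up hl hsz sub => [|r xk] pp pq up hl hsz sub.
      rewrite /= in hl; rewrite hl svK in jse1.
      apply: (cut_lemma' loopfree a1 e1T j1); apply: connect1.
      by apply/existsP; exists (se e1); rewrite !inE ne1 se1 /= joinsC hl.
    rewrite /= last_rcons in hl; subst xk.
    have up2 := up; rewrite -!rcons_cons rcons_uniq in up2.
    case/andP: up2 => xkn _.
    case: (eqVneq (sv x1) (last x1 r)) => [eqx|nex].
      apply: (IH x1 r) => //.
      - move: hsz hs; rewrite /= size_rcons => h1 h2.
        have h3 := leq_trans h1 h2; rewrite ltnS in h3; exact: ltnW h3.
      - by move: pq; rewrite rcons_path => /andP[].
    set e := se e1.
    have incE : (src e == sv v) || (tgt e == sv v) by case/andP: (joins_inc jse1).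
    have cA : connect (adjF src tgt (T1 :\ e)) v (sv v).
      apply/connectP; exists (x1 :: rcons r (sv v)); last by rewrite /= last_rcons.
      move: pp; rewrite -rcons_cons !rcons_path => /andP[pA /existsP[f /andP[fT jf]]].
      rewrite (avoid_path incE xkn pA) /=.
      apply/existsP; exists f; rewrite !inE fT jf andbT /= andbT.
      apply/eqP => fe; rewrite fe in jf.
      have lne : last x1 r != sv v.
        by apply: contraNneq xkn => <-; rewrite inE mem_last orbT.
      have /= h := joins_two jf jse1 lne; by move: nex; rewrite h eqxx.
    have cB : connect (adjF src tgt (T1 :\ e)) (sv x1) v.
      apply/connectP; exists (map sv (rcons r (sv v))); last by rewrite last_map last_rcons svK.
      apply: (map_path_adj hj (mTD T1 e1 mT1)).
      have incv : (src e1 == v) || (tgt e1 == v) by case/andP: (joins_inc j1).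
      by apply: (avoid_path incv) => //; move: up => /andP[].
    apply: (cut_lemma' loopfree a1 se1 jse1).
    rewrite (sym_connect_sym (adjF_sym _ _ _)).
    exact: connect_trans cB cA. }
  have [p pp hl] := connectP (c1 v0 (sv v0)).
  exact: main (size p) v0 p (leqnn _) pp (esym hl).
have uniqw : forall w, sv w = w -> w = u.
  move=> w fw; apply/eqP/negPn/negP => nwu.
  have [p0 pp0 hl0] := connectP (c1 u w).
  case: (shortenP pp0) hl0 => p pp up _ hl.
  case: p pp up hl => [|x1 q] pp up hl.
    by move: nwu; rewrite hl eqxx.
  have pq : path (adjF src tgt T1) x1 q by case/andP: pp.
  case/andP: (pp) => /existsP[e1 /andP[e1T j1]] _.
  have incu : (src e1 == u) || (tgt e1 == u) by case/andP: (joins_inc j1).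
  have un : u \notin x1 :: q by case/andP: up.
  apply: (cut_lemma' loopfree a1 e1T j1).
  have c1' : connect (adjF src tgt (T1 :\ e1)) x1 w.
    by apply/connectP; exists q => //; apply: (avoid_path incu un pq).
  have c2' : connect (adjF src tgt (T1 :\ e1)) u w.
    apply/connectP; exists (sv x1 :: map sv q); last first.
      by rewrite /= last_map; move: hl => /= <-; rewrite fw.
    rewrite /=; apply/andP; split.
      apply/existsP; exists (se e1); rewrite !inE Hnofix mT1 //=.
      by have := joins_map hj j1; rewrite fu.
    apply: (avoid_path incu).
      rewrite -map_cons; apply/negP => /mapP[y yin hy].
      have yu : y = u by rewrite -[y]svK -hy fu.
      by move: un; rewrite -yu yin.
    exact: (map_path_adj hj mT1 pq).
  apply: connect_trans c2' _.
  by rewrite (sym_connect_sym (adjF_sym _ _ _)).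
set D := [set e | (src e == u) || (tgt e == u)].
suff [hd1 hd2] : ~~ odd #|D| /\ 4 <= #|D| by exists u; split.
have hD (T : {set E}) : (forall e, e \in T -> se e \in T) ->
    forall e, e \in D :&: T -> se e \in D :&: T.
  move=> hT e; rewrite !inE => /andP[he eT]; rewrite hT // andbT.
  have := joins_inc (hj e).
  by case/orP: he => /eqP ->; rewrite fu => /andP[].
have evT (T : {set E}) : (forall e, e \in T -> se e \in T) -> ~~ odd #|D :&: T|.
  by move=> hT; exact: (even_invol (hD T hT) seK (fun e _ => Hnofix e)).
have [w nwu] : exists w, w != u.
  have [v0 [w0 vw]] := two.
  case: (eqVneq v0 u) => [e|n]; last by exists v0.
  by exists w0; rewrite -e eq_sym.
have neT (T : {set E}) : connectedF src tgt T -> 0 < #|D :&: T|.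
  move=> cT; have [p pp hl] := connectP (cT u w).
  case: p pp hl => [|x1 q] pp hl; first by move: nwu; rewrite hl eqxx.
  case/andP: pp => /existsP[e /andP[eT j]] _.
  apply/card_gt0P; exists e; rewrite !inE eT andbT.
  by case/andP: (joins_inc j).
have ge2 (T : {set E}) : connectedF src tgt T -> (forall e, e \in T -> se e \in T) ->
    2 <= #|D :&: T|.
  move=> cT hT; have := neT T cT; have := evT T hT.
  by case: #|D :&: T| => [|[|n]].
have DU : D = (D :&: T1) :|: (D :&: T2) by rewrite -setIUr T12U setIT.
have DI : (D :&: T1) :&: (D :&: T2) = set0 by rewrite setIACA setIid T12 setI0.
rewrite DU cardsU DI cards0 subn0.
have := ge2 T1 c1 mT1; have := ge2 T2 c2 mT2.
have := evT T1 mT1; have := evT T2 mT2.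
move=> o2 o1 g2 g1; rewrite oddD negb_add.
split; last by apply: (leq_add g1 g2).
by rewrite (negbTE o1) (negbTE o2).
Qed.
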